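(* Let $n\ge4$ be even, $p\ge n+1$ an integer, $c_1$ a positive integer, $a_k=pc_k$, $c_{k+1}=p^2c_k$, and let $T$, $I^{(k)}_i$ and $\lambda_j$ be as in the context. Then for every $k\ge0$: (1) $\lambda_1(I^{(k)}_3)=\lambda_1(I^{(k)}_5)=\cdots=\lambda_1(I^{(k)}_{n-1})$; (2) $\lambda_1(I^{(k)}_2)=\lambda_1(I^{(k)}_4)=\cdots=\lambda_1(I^{(k)}_{n-2})$; (3) for every odd $m$ with $3\le m\le n-1$: $\lambda_m(I^{(k)}_t)$ takes the same value for all odd $t\in\{3,\dots,n-1\}$ with $t\ne m$, and $\lambda_m(I^{(k)}_t)$ takes the same value for all even $t\in\{2,\dots,n-2\}$ with $t\ne m-1$.
   Context: $\pi$ is the permutation of $\{1,\dots,n\}$ with top row $1,2,\dots,n$ and bottom row $n,3,2,5,4,\dots,n-1,n-2,1$. Right Rauzy induction: step ''0'' when the rightmost domain (top) interval is longer, ''1'' when the rightmost image (bottom) interval is longer. For $a,c>0$, $\dot\gamma_{m,a}=1^{n-1-m}0^a10^2$, $\gamma_{a,c}=0\,\dot\gamma_{n-2,a}\cdots\dot\gamma_{2,a}\,1^{c(n-1)}$; its transition matrix $\Theta_{a,c}$ (old lengths $=\Theta_{a,c}\cdot$new lengths) has row $1=(1,c,\dots,c)$, row $n=(1,c+1,\dots,c+1)$, and for $1\le i\le(n-2)/2$: row $2i$ has $0$ in column 1, $2$ in columns $2i,2i+1$, $1$ in the other columns among $2,\dots,n$; row $2i+1$ has $a$ in column $2i$,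 $a+1$ in column $2i+1$, $0$ elsewhere. $\Theta_k=\Theta_{a_k,c_k}$. $T$ is an IET of $[0,1)$ with permutation $\pi$ whose right Rauzy induction path is $\gamma_{a_1,c_1}\gamma_{a_2,c_2}\cdots$; $I^{(k)}$ is the interval on which the induced map lives after the first $k$ blocks and $I^{(k)}_1,\dots,I^{(k)}_n$ its exchanged subintervals ($I^{(0)}_i$ are the initial subintervals of $T$); lengths satisfy $\ell^{(k-1)}=\Theta_k\ell^{(k)}$. For $v\ge0$, $|v|$ is the sum of entries and $\overline v=v/|v|$. $\lambda_j$ denotes the $T$-invariant Borel probability measure such that for every $k\ge0$, $(\lambda_j(I^{(k)}_i))_i$ is a positive multiple of $\lim_{m\to\infty}\overline{\Theta_{k+1}\cdots\Theta_me_j}$. *)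

(* Defs.v *)
From HB Require Import structures.
From mathcomp Require Import all_boot all_order all_algebra.
From mathcomp Require Import all_classical all_reals all_analysis.
Set Implicit Arguments. Unset Strict Implicit. Unset Printing Implicit Defensive.
Import Order.TTheory GRing.Theory Num.Theory.
Import numFieldNormedType.Exports.
Local Open Scope classical_set_scope.
Local Open Scope ring_scope.

Definition toprow (n : nat) : seq nat := iota 1 n.
(* bottom row n,3,2,5,4,...,n-1,n-2,1 *)
Definition botrow (n : nat) : seq nat :=
  n :: flatten [seq [:: i.*2.+1; i.*2] | i <- iota 1%N (n.-2)./2] ++ [:: 1%N].

(* ---------- the induction words (false = step "0", true = step "1") ---------- *)
Definition gdot (n m a : nat) : seq bool :=
  nseq (n.-1 - m)%N true ++ nseq a false ++ [:: true; false; false].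
(* \gamma_{a,c} = 0 \dot\gamma_{n-2,a} \dot\gamma_{n-4,a} ... \dot\gamma_{2,a} 1^{c(n-1)} *)
Definition gamma (n a c : nat) : seq bool :=
  false :: flatten [seq gdot n (n - i.*2)%N a | i <- iota 1%N (n.-2)./2]
        ++ nseq (c * n.-1)%N true.

(* c_1 given, c_{k+1} = p^2 c_k, a_k = p c_k  (k >= 1) *)
Definition cseq (p c1 k : nat) : nat := iter k.-1 (fun c => p ^ 2 * c)%N c1.
Definition aseq (p c1 k : nat) : nat := (p * cseq p c1 k)%N.

Definition pathk (n p c1 k : nat) : seq bool :=
  flatten [seq gamma n (aseq p c1 j) (cseq p c1 j) | j <- iota 1%N k].

(* a state: (top row of labels, bottom row of labels, lengths of the labels) *)
Definition rstate (R : realType) := (seq nat * seq nat * (nat -> R))%type.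

Definition droplast (s : seq nat) : seq nat := take (size s).-1 s.
Definition insert_after (x y : nat) (s : seq nat) : seq nat :=
  take (index x s).+1 s ++ y :: drop (index x s).+1 s.

(* one right Rauzy step, required to be of type t; None if the actual type
   differs from t (or the two rightmost intervals have equal length). *)
Definition rstep (R : realType) (t : bool) (s : rstate R) : option (rstate R) :=
  let: (tp, bt, l) := s in
  let al := last 0%N tp in
  let be := last 0%N bt in
  if ~~ t then
    (* step "0": rightmost top interval (label al) is longer *)
    if l be < l al then
      Some (tp, insert_after al be (droplast bt),
            fun i => if i == al then l al - l be else l i)
    else None
  else
    (* step "1": rightmost bottom interval (label be) is longer *)
    if l al < l be then
      Some (insert_after be al (droplast tp), bt,
            fun i => if i == be then l be - l al else l i)
    else None.

Fixpoint rrun (R : realType) (w : seq bool) (s : rstate R) : option (rstate R) :=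
  match w with
  | [::] => Some s
  | t :: w' => match rstep t s with Some s' => rrun w' s' | None => None end
  end.

Definition rauzy_after (R : realType) (n p c1 : nat) (l0 : nat -> R) (k : nat)
  : option (rstate R) :=
  rrun (pathk n p c1 k) (toprow n, botrow n, l0).

Definition start (R : realType) (row : seq nat) (l : nat -> R) (i : nat) : R :=
  \sum_(j <- take (index i row) row) l j.

Definition Ik (R : realType) (n p c1 : nat) (l0 : nat -> R) (k i : nat) : set R :=
  match rauzy_after n p c1 l0 k with
  | Some (tp, _, l) => [set x : R | start tp l i <= x /\ x < start tp l i + l i]
  | None => set0
  end.

(* the IET T on [0,1) with permutation pi and lengths l0 (identity off [0,1)) *)
Definition iet (R : realType) (n : nat) (l0 : nat -> R) (x : R) : R :=
  if (0 <= x) && (x < 1) then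
    x + \sum_(i <- iota 1 n)
          (if (start (toprow n) l0 i <= x) && (x < start (toprow n) l0 i + l0 i)
           then start (botrow n) l0 i - start (toprow n) l0 i else 0)
  else x.

(* entry (i,j), 1-based *)
Definition Theta_entry (n a c i j : nat) : nat :=
  if i == 1%N then (if j == 1%N then 1%N else c)
  else if i == n then (if j == 1%N then 1%N else c.+1)
  else if ~~ odd i then
    (if j == 1%N then 0%N else if (j == i) || (j == i.+1) then 2%N else 1%N)
  else (if j == i.-1 then a else if j == i then a.+1 else 0%N).

Definition Theta (R : realType) (n a c : nat) : 'M[R]_n :=
  \matrix_(i < n, j < n) (Theta_entry n a c i.+1 j.+1)%:R.
Arguments Theta : clear implicits.

Definition Thetak (R : realType) (n p c1 k : nat) : 'M[R]_n :=
  Theta R n (aseq p c1 k) (cseq p c1 k).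
Arguments Thetak : clear implicits.

Fixpoint prodTheta (R : realType) (n p c1 k d : nat) : 'M[R]_n :=
  match d with
  | 0 => 1%:M
  | d'.+1 => prodTheta R n p c1 k d' *m Thetak R n p c1 (k + d'.+1)
  end.
Arguments prodTheta : clear implicits.

(* \overline{Theta_{k+1}...Theta_{k+d} e_j}, coordinate i (j = j0+1, i = i0+1) *)
Definition normcol (R : realType) (n p c1 k : nat) (j0 : 'I_n) (d : nat) (i : 'I_n) : R :=
  prodTheta R n p c1 k d i j0 / \sum_(i' < n) prodTheta R n p c1 k d i' j0.
Arguments normcol : clear implicits.

(* mu is lambda_j (j = j0 + 1): a T-invariant Borel probability measure
   (concentrated on [0,1)) such that for every k the vector
   (mu(I^{(k)}_i))_i is a positive multiple of lim_m \overline{Theta_{k+1}...Theta_m e_j} *)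
Definition is_lambda (R : realType) (n p c1 : nat) (l0 : nat -> R)
    (j0 : 'I_n) (mu : probability R R) : Prop :=
  mu [set x : R | 0 <= x /\ x < 1] = 1%E /\
  (forall A : set R, measurable A -> mu (iet n l0 @^-1` A) = mu A) /\
  (forall k : nat, exists L : 'I_n -> R, exists cst : R,
      0 < cst /\
      (forall i : 'I_n, (fun d : nat => normcol R n p c1 k j0 d i) @ \oo --> (L i : R)) /\
      (forall i : 'I_n, mu (Ik n p c1 l0 k i.+1) = (cst * L i)%:E)).
Arguments is_lambda {R} n p c1 l0 j0 mu.

(* Main.v *)
Require Import Defs.
From HB Require Import structures.
From mathcomp Require Import all_boot all_order all_algebra.
From mathcomp Require Import all_classical all_reals all_analysis.
From mathcomp Require Import zify ring lra.
Import Order.TTheory GRing.Theory Num.Theory.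
Import numFieldNormedType.Exports.
Local Open Scope classical_set_scope.
Local Open Scope ring_scope.

Definition oddpos (n m i : nat) := [&& ~~ odd i, (2 <= i)%N, (i <= n - 2)%N & i.+1 != m].
Definition evenpos (n m i : nat) := [&& odd i, (1 <= i)%N, (i <= n - 3)%N & i.+2 != m].
Definition inC (R : realType) n m (v : 'cV[R]_n) :=
  (forall i i' : 'I_n, oddpos n m i -> oddpos n m i' -> v i 0 = v i' 0) /\
  (forall i i' : 'I_n, evenpos n m i -> evenpos n m i' -> v i 0 = v i' 0).
Arguments inC {R n} m v.

Lemma sum_ind (R : realType) n (k : 'I_n) (F : 'I_n -> R) :
  \sum_(j < n) (if j == k then F j else 0) = F k.
Proof. by rewrite (bigD1 k) //= eqxx big1 ?addr0 // => j /negbTE ->. Qed.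

Lemma Theta_odd (R : realType) n a c (v : 'cV[R]_n.+1) m (i : 'I_n.+1) :
  oddpos n.+1 m i ->
  (Theta R n.+1 a c *m v) i 0 = a%:R * v (inord i.-1) 0 + (a.+1)%:R * v i 0.
Proof.
move=> /and4P[ei i2 in2 im].
have hi1 : ((inord i.-1 : 'I_n.+1) : nat) = i.-1 by rewrite inordK //; lia.
rewrite mxE.
rewrite (eq_bigr (fun j => (if j == inord i.-1 then a%:R * v j 0 else 0) + (if j == i then a.+1%:R * v j 0 else 0))).
  by rewrite big_split /= !sum_ind.
move=> j _; rewrite mxE /Theta_entry -!val_eqE /= hi1.
have Hj := ltn_ord j.
rewrite ifF; last by apply/negbTE; lia.
rewrite ifF; last by apply/negbTE; lia.
rewrite (negbTE ei) /=.
case: ifP => /eqP h1.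
- rewrite ifT; last by apply/eqP; lia.
  by rewrite ifF ?addr0 //; apply/negbTE; lia.
case: ifP => /eqP h2.
- rewrite ifF; last by apply/negbTE; lia.
  rewrite ifT; last by apply/eqP; lia.
  by rewrite add0r.
- rewrite ifF; last by apply/negbTE; lia.
  rewrite ifF; last by apply/negbTE; lia.
  by rewrite mul0r addr0.
Qed.

Lemma Theta_even (R : realType) n a c (v : 'cV[R]_n.+1) m (i : 'I_n.+1) :
  evenpos n.+1 m i ->
  (Theta R n.+1 a c *m v) i 0 =
  \sum_(j < n.+1) v j 0 - v (inord 0) 0 + v i 0 + v (inord i.+1) 0.
Proof.
move=> /and4P[ei i2 in2 im].
have hi1 : ((inord i.+1 : 'I_n.+1) : nat) = i.+1 by rewrite inordK //; lia.
have hi0 : ((inord 0 : 'I_n.+1) : nat) = 0%N by rewrite inordK.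
rewrite mxE.
rewrite (eq_bigr (fun j => v j 0 - (if j == inord 0 then v j 0 else 0) + (if j == i then v j 0 else 0) + (if j == inord i.+1 then v j 0 else 0))).
  by rewrite !big_split /= sumrN !sum_ind.
move=> j _; rewrite mxE /Theta_entry -!val_eqE /= hi1 hi0.
have Hj := ltn_ord j.
rewrite ifF; last by apply/negbTE; lia.
rewrite ifF; last by apply/negbTE; lia.
rewrite ei /=.
case: ifP => /eqP h1.
  rewrite ifT; last by apply/eqP; lia.
  rewrite ifF; last by apply/negbTE; lia.
  rewrite ifF; last by apply/negbTE; lia.
  by rewrite mul0r subrr !addr0.
have h0 : (j == 0%N :> nat) = false by apply/negbTE; lia.
rewrite h0 subr0.
have [ha|ha] := eqVneq (j : nat) i; have [hb|hb] := eqVneq (j : nat) i.+1; try lia.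
- rewrite ifT; last by apply/orP; left; apply/eqP; lia.
  by rewrite addr0 mulr2n mulrDl mul1r.
- rewrite ifT; last by apply/orP; right; apply/eqP; lia.
  by rewrite addr0 mulr2n mulrDl mul1r.
- rewrite ifF; last by apply/negbTE; lia.
  by rewrite mul1r !addr0.
Qed.

Arguments Theta_odd {R n} a c v {m i}.
Arguments Theta_even {R n} a c v {m i}.
Lemma Theta_inC (R : realType) n a c m (v : 'cV[R]_n.+1) :
  inC m v -> inC m (Theta R n.+1 a c *m v).
Proof.
move=> [Ho He]; split.
- move=> i i' hi hi'; rewrite (Theta_odd a c v hi) (Theta_odd a c v hi').
  have e1 : forall k : 'I_n.+1, oddpos n.+1 m k -> evenpos n.+1 m (inord k.-1 : 'I_n.+1).
    move=> k; rewrite /evenpos inordK; last by have := ltn_ord k; lia.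
    case: (nat_of_ord k) => [|k'] /and4P[a1 a2 a3 a4] //=.
    move: a1 => /= /negPn a1; rewrite a1 a4 andbT /=; apply/andP; split; lia.
  by rewrite (He _ _ (e1 _ hi) (e1 _ hi')) (Ho _ _ hi hi').
- move=> i i' hi hi'; rewrite (Theta_even a c v hi) (Theta_even a c v hi').
  have e1 : forall k : 'I_n.+1, evenpos n.+1 m k -> oddpos n.+1 m (inord k.+1 : 'I_n.+1).
    move=> k /and4P[a1 a2 a3 a4]; rewrite /oddpos inordK; last lia.
    rewrite /= a1 a4 andbT /=; apply/andP; split; lia.
  by rewrite (He _ _ hi hi') (Ho _ _ (e1 _ hi) (e1 _ hi')).
Qed.

Lemma prod_inC (R : realType) n p c1 m : forall d k (v : 'cV[R]_n.+1),
  inC m v -> inC m (prodTheta R n.+1 p c1 k d *m v).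
Proof.
elim=> [|d IH] k v hv /=; first by rewrite mul1mx.
by rewrite -mulmxA; apply: IH; apply: Theta_inC.
Qed.

Lemma delta_inC (R : realType) n (j0 : 'I_n.+1) :
  ~~ odd j0 -> inC j0.+1 (delta_mx j0 0 : 'cV[R]_n.+1).
Proof.
move=> ej.
have z : forall i : 'I_n.+1, i != j0 -> (delta_mx j0 0 : 'cV[R]_n.+1) i 0 = 0.
  by move=> i /negbTE hi; rewrite mxE hi.
split=> i i' ha hb; rewrite !z //; apply/negP => /eqP h;
  first [ by move: ha; rewrite h /oddpos eqxx !andbF
        | by move: hb; rewrite h /oddpos eqxx !andbF
        | by move: ha; rewrite h /evenpos (negbTE ej)
        | by move: hb; rewrite h /evenpos (negbTE ej) ].
Qed.

Lemma key (R : realType) n p c1 (l0 : nat -> R) (j0 : 'I_n.+1) (mu : probability R R) :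
  ~~ odd j0 -> is_lambda n.+1 p c1 l0 j0 mu -> forall k (i i' : 'I_n.+1),
  (oddpos n.+1 j0.+1 i && oddpos n.+1 j0.+1 i') || (evenpos n.+1 j0.+1 i && evenpos n.+1 j0.+1 i') ->
  mu (Ik n.+1 p c1 l0 k i.+1) = mu (Ik n.+1 p c1 l0 k i'.+1).
Proof.
move=> ej [_ [_ H]] k i i' hii.
have [L [cst [_ [Hc Hm]]]] := H k.
rewrite !Hm.
have eqd : (fun d => normcol R n.+1 p c1 k j0 d i) = (fun d => normcol R n.+1 p c1 k j0 d i').
  apply: funext => d; rewrite /normcol; congr (_ / _).
  have [Ho He] := @prod_inC R n p c1 _ d k _ (@delta_inC R n j0 ej).
  rewrite -!colE in Ho He.
  have := Ho i i'; have := He i i'; rewrite !mxE.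
  case/orP: hii => /andP[h1 h2] A B; [exact: B | exact: A].
have h1 := Hc i; have h2 := Hc i'; rewrite eqd in h1.
by rewrite (cvg_unique _ h1 h2).
Qed.

Lemma key_nat (R : realType) n p c1 (l0 : nat -> R) (j0 : 'I_n.+1) (mu : probability R R) :
  ~~ odd j0 -> is_lambda n.+1 p c1 l0 j0 mu -> forall k (s s' : nat),
  (s < n.+1)%N -> (s' < n.+1)%N ->
  (oddpos n.+1 j0.+1 s && oddpos n.+1 j0.+1 s') || (evenpos n.+1 j0.+1 s && evenpos n.+1 j0.+1 s') ->
  mu (Ik n.+1 p c1 l0 k s.+1) = mu (Ik n.+1 p c1 l0 k s'.+1).
Proof.
move=> ej hl k s s' hs hs' h.
have := @key R n p c1 l0 j0 mu ej hl k (inord s) (inord s'); rewrite !inordK //; exact.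
Qed.

Theorem mainTheorem7 (R : realType) (n p c1 : nat) (l0 : nat -> R) :
  (4 <= n)%N -> ~~ odd n -> (n.+1 <= p)%N -> (0 < c1)%N ->
  (forall i : nat, (1 <= i <= n)%N -> 0 < l0 i) ->
  \sum_(i <- iota 1 n) l0 i = 1 ->
  (forall k : nat, rauzy_after n p c1 l0 k <> None) ->
  (forall (j0 : 'I_n) (mu : probability R R), val j0 = 0%N ->
     is_lambda n p c1 l0 j0 mu ->
     forall k : nat,
       (forall t t' : nat, odd t -> odd t' -> (3 <= t <= n.-1)%N -> (3 <= t' <= n.-1)%N ->
          mu (Ik n p c1 l0 k t) = mu (Ik n p c1 l0 k t')) /\
       (forall t t' : nat, ~~ odd t -> ~~ odd t' -> (2 <= t <= n - 2)%N -> (2 <= t' <= n - 2)%N ->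
          mu (Ik n p c1 l0 k t) = mu (Ik n p c1 l0 k t'))) /\
  (forall (j0 : 'I_n) (mu : probability R R),
     let m := (val j0).+1 in
     odd m -> (3 <= m <= n.-1)%N ->
     is_lambda n p c1 l0 j0 mu ->
     forall k : nat,
       (forall t t' : nat, odd t -> odd t' -> (3 <= t <= n.-1)%N -> (3 <= t' <= n.-1)%N ->
          t <> m -> t' <> m ->
          mu (Ik n p c1 l0 k t) = mu (Ik n p c1 l0 k t')) /\
       (forall t t' : nat, ~~ odd t -> ~~ odd t' -> (2 <= t <= n - 2)%N -> (2 <= t' <= n - 2)%N ->
          t <> m.-1 -> t' <> m.-1 ->
          mu (Ik n p c1 l0 k t) = mu (Ik n p c1 l0 k t'))).
Proof.
case: n => [|n] //= hn _ _ _ _ _ _; split.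
- move=> j0 mu hj0 hl k.
  have ej : ~~ odd j0 by rewrite hj0.
  split=> [[|t] [|t'] //= ot ot' ht ht' | [|t] [|t'] //= ot ot' ht ht'];
    apply: (@key_nat R n p c1 l0 j0 mu ej hl); try lia; apply/orP.
  + left; rewrite /oddpos hj0 -(negbK (odd t)) -(negbK (odd t')) ot ot' /=.
    apply/andP; split; apply/and3P; split => //; lia.
  + right; rewrite /evenpos hj0 -(negbK (odd t)) -(negbK (odd t')) ot ot' /=.
    apply/andP; split; apply/and3P; split => //; lia.
- move=> j0 mu /= om hm hl k.
  have ej : ~~ odd j0 by [].
  split=> [[|t] [|t'] //= ot ot' ht ht' htm htm' | [|t] [|t'] //= ot ot' ht ht' htm htm'];
    apply: (@key_nat R n p c1 l0 j0 mu ej hl); try lia; apply/orP.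
  + left; rewrite /oddpos -(negbK (odd t)) -(negbK (odd t')) ot ot' /=.
    apply/andP; split; apply/and3P; split => //; lia.
  + right; rewrite /evenpos -(negbK (odd t)) -(negbK (odd t')) ot ot' /=.
    apply/andP; split; apply/and3P; split => //; lia.
Qed.
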